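(* Let $q$ be a positive integer, let $a$ be an integer invertible modulo $q$, and let $\mathbf{r}\in\mathbb{N}_0^{q-1}$. Then $|\mathscr{W}^{(q)}_{\mathbf{r}}|=|\mathscr{W}^{(q)}_{{}^a\mathbf{r}}|$.
   Context: A composition is a finite sequence $\delta=(\delta_1,\ldots,\delta_s)$ of positive integers, $\ell(\delta)=s$; partial sums $\delta^+_j=\sum_{i=1}^j\delta_i$. A composition $\delta$ is $q'$-cumulative if it is nonempty and $q\nmid\delta^+_j$ for all $1\leq j\leq\ell(\delta)$. For $\mathbf{r}=(r_1,\ldots,r_{q-1})\in\mathbb{N}_0^{q-1}$, let $\mu$ be the partition with exactly $r_i$ parts equal to $i$ for each $1\le i\le q-1$ and no other parts, and let $\mathscr{W}^{(q)}_{\mathbf{r}}$ be the set of $q'$-cumulative compositions that are rearrangements of $\mu$. For $a$ invertible modulo $q$, ${}^a\mathbf{r}=(r'_1,\ldots,r'_{q-1})$ where $r'_j=r_i$ whenever $j\equiv ai\pmod q$ ($1\le i,j\le q-1$). *)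

(* Defs.v *)
From mathcomp Require Import all_boot all_order all_algebra.
Set Implicit Arguments. Unset Strict Implicit. Unset Printing Implicit Defensive.
Import GRing.Theory Num.Theory.

(* r in N_0^{q-1} is a seq nat of size q-1; r_i (1 <= i <= q-1) is nth 0 r i.-1 *)
Definition rcomp (r : seq nat) (i : nat) : nat := nth 0 r i.-1.

Definition psum (d : seq nat) (j : nat) : nat := sumn (take j d).

Definition is_composition (d : seq nat) : bool := all (fun x => 0 < x) d.

Definition qcumulative (q : nat) (d : seq nat) : bool :=
  [&& is_composition d, d != [::] &
      all (fun j => ~~ (q %| psum d j)) (iota 1 (size d))].

Definition mu_of (q : nat) (r : seq nat) : seq nat :=
  flatten [seq nseq (rcomp r i) i | i <- iota 1 q.-1].

(* W^{(q)}_r : the q'-cumulative rearrangements of mu, as a duplicate-free list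
   (permutations s is the duplicate-free list of all rearrangements of s) *)
Definition Wset (q : nat) (r : seq nat) : seq (seq nat) :=
  [seq d <- permutations (mu_of q r) | qcumulative q d].

(* ^a r : r'_j = r_i whenever j = a i (mod q), 1 <= i, j <= q-1 *)
Definition arot (q : nat) (a : int) (r : seq nat) : seq nat :=
  [seq nth 0 r (find (fun i : nat => ((j%:Z)%R == (a * i%:Z)%R %[mod q%:Z])%Z)
                     (iota 1 q.-1))
  | j <- iota 1 q.-1].

(* Main.v *)
Require Import Defs.
From mathcomp Require Import all_boot all_order all_algebra.
From mathcomp Require Import zify.

Set Implicit Arguments.
Section Aux.
Variables (q c c' : nat).
Hypothesis qpos : 0 < q.
Hypothesis Hcc : (c * c') %% q = 1 %% q.

Definition mc (x : nat) := (c * x) %% q.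

Lemma mcK x : (c' * mc x) %% q = x %% q.
Proof.
rewrite /mc modnMmr mulnA (mulnC c') -modnMml Hcc modnMml mul1n //.
Qed.

Lemma mc_range x : 0 < x < q -> 0 < mc x < q.
Proof.
move=> /andP[x0 xq]; rewrite /mc ltn_pmod // andbT lt0n; apply/negP => /eqP H.
have := mcK x; rewrite /mc H muln0 mod0n (modn_small xq) => E; move: x0; rewrite -E //.
Qed.

Lemma mc_inj x y : 0 < x < q -> 0 < y < q -> mc x = mc y -> x = y.
Proof.
move=> /andP[_ xq] /andP[_ yq] E.
by rewrite -(modn_small xq) -(modn_small yq) -mcK E mcK.
Qed.

Lemma sumn_mc s : sumn (map mc s) %% q = (c * sumn s) %% q.
Proof.
elim: s => [|x s IH] /=; first by rewrite muln0.
by rewrite -modnDmr IH modnDmr /mc modnDml mulnDr.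
Qed.

Lemma dvd_mc s : (q %| sumn (map mc s)) = (q %| sumn s).
Proof.
rewrite /dvdn sumn_mc; apply/eqP/eqP => H.
  by rewrite -mcK /mc H muln0 mod0n.
by rewrite -modnMmr H muln0 mod0n.
Qed.

End Aux.

Lemma mem_mu q r x : x \in mu_of q r -> 0 < x < q.
Proof.
rewrite /mu_of => /flattenP [s /mapP [i Hi ->]].
rewrite mem_nseq => /andP[_ /eqP ->]; move: Hi; rewrite mem_iota; lia.
Qed.

Arguments mcK {q c c'}.
Arguments mc_range {q c c'}.
Arguments mc_inj {q c c'}.
Arguments dvd_mc {q c c'}.
Lemma perm_mu q c c' r r' : 0 < q -> (c * c') %% q = 1 %% q ->
  (forall i, 0 < i < q -> rcomp r' (mc q c i) = rcomp r i) ->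
  perm_eq (map (mc q c) (mu_of q r)) (mu_of q r').
Proof.
move=> qpos Hcc H.
rewrite /mu_of map_flatten -map_comp.
have -> : map (map (mc q c) \o (fun i => nseq (rcomp r i) i)) (iota 1 q.-1) =
   map (fun j => nseq (rcomp r' j) j) (map (mc q c) (iota 1 q.-1)).
  rewrite -map_comp; apply/eq_in_map => i; rewrite mem_iota => Hi /=.
  rewrite map_nseq H //; lia.
apply/perm_flatten/perm_map.
have U : uniq (map (mc q c) (iota 1 q.-1)).
  rewrite map_inj_in_uniq ?iota_uniq // => x y; rewrite !mem_iota => Hx Hy.
  move=> E; apply: (mc_inj Hcc) E; lia.
apply: uniq_perm => //; first exact: iota_uniq.
have [] := uniq_min_size U (s2 := iota 1 q.-1).
- move=> x /mapP [i]; rewrite !mem_iota => Hi ->.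
  have := mc_range qpos Hcc i; lia.
- by rewrite size_map.
- by [].
Qed.

Arguments perm_mu {q c c' r r'}.
Lemma memW q r d : (d \in Wset q r) = perm_eq d (mu_of q r) && qcumulative q d.
Proof. by rewrite /Wset mem_filter mem_permutations andbC. Qed.

Arguments mc_range {q c c'}.
Lemma Wle q c c' r r' : 0 < q -> (c * c') %% q = 1 %% q ->
  (forall i, 0 < i < q -> rcomp r' (mc q c i) = rcomp r i) ->
  size (Wset q r) <= size (Wset q r').
Proof.
move=> qpos Hcc H.
rewrite -(size_map (map (mc q c))).
have rng : forall d, d \in Wset q r -> forall x, x \in d -> 0 < x < q.
  move=> d; rewrite memW => /andP[P _] x xd; apply: (mem_mu q r).
  by rewrite -(perm_mem P).
apply: uniq_leq_size.
  rewrite map_inj_in_uniq ?filter_uniq ?permutations_uniq //.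
  move=> d1 d2 H1 H2 E.
  have K : forall d, d \in Wset q r -> map (fun x => (c' * x) %% q) (map (mc q c) d) = d.
    move=> d Hd; rewrite -map_comp; apply: map_id_in => x xd /=.
    rewrite (mcK Hcc); apply: modn_small; have := rng d Hd x xd; lia.
  by rewrite -(K _ H1) E K.
move=> d' /mapP [d Hd ->]; move: (Hd); rewrite !memW => /andP[P Qc].
apply/andP; split.
  exact: perm_trans (perm_map _ P) (perm_mu qpos Hcc H).
move: Qc; rewrite /qcumulative /is_composition size_map => /and3P[A N B].
apply/and3P; split.
- apply/allP => y /mapP [x xd ->]; have := mc_range qpos Hcc x (rng d Hd x xd); lia.
- by case: (d) N.
- apply/allP => j Hj; have := allP B j Hj.
  by rewrite /psum -map_take (dvd_mc Hcc).
Qed.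
Arguments Wle {q c c' r r'}.

Lemma find_iota m n i : m <= i < m + n -> find (pred1 i) (iota m n) = i - m.
Proof.
elim: n m => [|n IH] m /=; first lia.
move=> Hi; case: eqP => [->|ne]; first by rewrite subnn.
rewrite IH; lia.
Qed.

Lemma Kpred q (a : int) c j k : Posz c = (a %% q%:Z)%Z ->
  ((j%:Z == a * k%:Z %[mod q%:Z])%Z) = (j %% q == (c * k) %% q).
Proof.
move=> Hc; rewrite -modzMml -Hc -PoszM !modz_nat eqz_nat //.
Qed.

Lemma Kr q (a : int) c c' r i j : 0 < q -> Posz c = (a %% q%:Z)%Z ->
  (c * c') %% q = 1 %% q -> 0 < i < q -> 0 < j < q -> j %% q = (c * i) %% q ->
  rcomp (arot q a r) j = rcomp r i.
Proof.
move=> qpos Hc Hcc Hi Hj Eji.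
rewrite /rcomp /arot (nth_map 0) ?size_iota; last lia.
rewrite nth_iota; last lia.
have -> : 1 + j.-1 = j by lia.
rewrite (eq_in_find (a2 := pred1 i)).
  rewrite find_iota; last lia.
  by have -> : i - 1 = i.-1 by lia.
move=> k; rewrite mem_iota => Hk /=; rewrite (Kpred _ _ _ _ Hc) Eji.
apply/eqP/eqP => [E|->] //.
symmetry; apply: (mc_inj Hcc) => //; lia.
Qed.

Arguments Kr {q a c c' r i j}.
Theorem lemma2 (q : nat) (a : int) (r : seq nat) :
  0 < q ->
  (exists b : int, ((a * b)%R == 1 %[mod q%:Z])%Z) ->
  size r = q.-1 ->
  size (Wset q r) = size (Wset q (arot q a r)).
Proof.
move=> qpos [b Hab] _.
have nz : (q%:Z != 0)%R by rewrite eqz_nat -lt0n.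
have [c Hc] : exists c : nat, Posz c = (a %% q%:Z)%Z.
  have := modz_ge0 a nz; case: (a %% q%:Z)%Z => [n|n] //; by exists n.
have [c' Hc'] : exists c : nat, Posz c = (b %% q%:Z)%Z.
  have := modz_ge0 b nz; case: (b %% q%:Z)%Z => [n|n] //; by exists n.
have Hcc : (c * c') %% q = 1 %% q.
  apply/eqP; rewrite -eqz_nat -!modz_nat PoszM Hc Hc' modzMm; exact: Hab.
have Hcc' : (c' * c) %% q = 1 %% q by rewrite mulnC.
apply/eqP; rewrite eqn_leq; apply/andP; split.
- apply: (Wle qpos Hcc) => i Hi.
  have := mc_range qpos Hcc i Hi => Hj.
  apply: (Kr qpos Hc Hcc) => //; by rewrite /mc modn_mod.
- apply: (Wle qpos Hcc') => i Hi.
  have := mc_range qpos Hcc' i Hi => Hj.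
  symmetry; apply: (Kr qpos Hc Hcc) => //.
  by rewrite (mcK Hcc').
Qed.
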